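(* The restrictions to $L^{(d-1)}$ of the polynomials $\langle v,v\rangle$ and $\langle M^kv,M^kv\rangle$, $1\le k<d$, generate the field $\mathbb C(L^{(d-1)})^{W_d(\mathbb C)}$ of $W_d(\mathbb C)$-invariant rational functions on $L^{(d-1)}$.
   Context: Fix $d\ge2$. $V=\mathbb C^d\oplus\mathfrak{so}(d,\mathbb C)$ has elements $(v,M)$, $v=(c_1,\dots,c_d)^\top$, $M$ complex skew-symmetric with $M_{ij}=c_{ij}=-M_{ji}$ for $i<j$, on which $O_d(\mathbb C)=\{A:AA^\top=I\}$ acts by $(Av,AMA^\top)$. $\langle a,b\rangle=\sum_ia_ib_i$ (bilinear, no conjugation). $L^{(d-1)}\subset V$ is the linear subspace of pairs with $v=(0,\dots,0,c_d)^\top$ and $M$ having only the entries $c_{12},c_{23},\dots,c_{(d-1)d}$ (and their negatives) possibly nonzero. $W_d(\mathbb C)$ is the group of diagonal matrices with diagonal entries in $\{-1,1\}$, acting on $L^{(d-1)}$ by restriction of the action. Generation is as a field over $\mathbb C$. *)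

(* Defs.v *)
From mathcomp Require Import all_boot all_order all_algebra.
From mathcomp Require Import reals.
From mathcomp.real_closed Require Import complex.
From mathcomp Require Import mpoly.
Set Implicit Arguments. Unset Strict Implicit. Unset Printing Implicit Defensive.
Import GRing.Theory.
Local Open Scope ring_scope.

(* Coordinates on L^(d-1) are indexed by 'I_d:
     variable 'X_i (i < d-1)  = c_{i+1,i+2}  (0-based i),
     variable 'X_(d-1)        = c_d.
   Polynomial functions on L^(d-1) are {mpoly C[d]}. *)

Section Defs.
Variables (F : idomainType) (d : nat).

(* the generic point (v, M) of L^(d-1) *)
Definition genv : 'cV[{mpoly F[d]}]_d :=
  \col_(i < d) (if i.+1 == d then 'X_i else 0).
Definition genM : 'M[{mpoly F[d]}]_d :=
  \matrix_(i < d, j < d)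
    (if j == i.+1 :> nat then 'X_i
     else if i == j.+1 :> nat then - 'X_j else 0).

Definition bform (a b : 'cV[{mpoly F[d]}]_d) : {mpoly F[d]} :=
  \sum_(i < d) a i 0 * b i 0.

(* restriction of <M^k v, M^k v> to L^(d-1); k = 0 gives <v,v> *)
Definition genpoly (k : nat) : {mpoly F[d]} :=
  let w := iter k (mulmx genM) genv in bform w w.

(* coordinates (c_{12},...,c_{(d-1)d}, c_d) of a pair (v,M) *)
Definition coordL (v : 'cV[{mpoly F[d]}]_d) (M : 'M[{mpoly F[d]}]_d) (i : 'I_d)
  : {mpoly F[d]} :=
  if i.+1 == d then v i 0 else \sum_(j < d | j == i.+1 :> nat) M i j.

(* the element of W_d(C) given by signs s: diag((-1)^(s i)) *)
Definition Wmat (s : {ffun 'I_d -> bool}) : 'M[{mpoly F[d]}]_d :=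
  diag_mx (\row_(i < d) ((-1) ^+ s i)).

Definition Wact (s : {ffun 'I_d -> bool}) (p : {mpoly F[d]}) : {mpoly F[d]} :=
  let A := Wmat s in
  comp_mpoly [tuple coordL (A *m genv) (A *m genM *m A^T) i | i < d] p.

Definition evalgens (P : {mpoly F[d]}) : {mpoly F[d]} :=
  comp_mpoly [tuple genpoly i | i < d] P.

End Defs.

(* Main.v *)
Require Import Defs.
From mathcomp Require Import all_boot all_order all_algebra.
From mathcomp Require Import reals.
From mathcomp.real_closed Require Import complex.
From mathcomp Require Import mpoly.
From mathcomp Require Import ring zify.
Import GRing.Theory.
Set Implicit Arguments. Unset Strict Implicit. Unset Printing Implicit Defensive.
Local Open Scope ring_scope.

Section Sc.
Variables (F : fieldType) (d : nat).
Local Notation P := {mpoly F[d]}.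

Definition sc (l : 'I_d -> F) (f : P) : P :=
  comp_mpoly [tuple l i *: 'X_i | i < d] f.
Definition lpow (l : 'I_d -> F) (m : 'X_{1..d}) : F := \prod_(i < d) l i ^+ m i.

Lemma coef_sumZ (g : 'X_{1..d} -> F) (f : P) m :
  (\sum_(m' <- msupp f) (g m' * f@_m') *: 'X_[m'])@_m = g m * f@_m.
Proof.
rewrite raddf_sum /=.
transitivity (\sum_(m' <- msupp f) g m * (f@_m' * (m' == m)%:R)).
  apply: eq_bigr => m' _; rewrite mcoeffZ mcoeffX.
  by case: eqP => [->|_]; rewrite ?mulr0 ?mulr1.
rewrite -mulr_sumr; congr (_ * _).
transitivity ((\sum_(m' <- msupp f) f@_m' *: 'X_[m'])@_m); last by rewrite -mpolyE.
rewrite raddf_sum /=; apply: eq_bigr => m' _.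
by rewrite mcoeffZ mcoeffX.
Qed.

Lemma sc_expand l f : sc l f = \sum_(m <- msupp f) (lpow l m * f@_m) *: 'X_[m].
Proof.
rewrite /sc comp_mpolyEX; apply: eq_bigr => m _.
rewrite comp_mpolyX (eq_bigr (fun i => l i ^+ m i *: 'X_i ^+ m i)); last first.
  by move=> i _; rewrite tnth_mktuple exprZn.
by rewrite scaler_prod -mpolyXE_id scalerA mulrC.
Qed.

Lemma mcoeff_sc l f m : (sc l f)@_m = lpow l m * f@_m.
Proof. by rewrite sc_expand coef_sumZ. Qed.

Lemma eq_sc l l' f : l =1 l' -> sc l f = sc l' f.
Proof.
move=> e; apply/mpolyP => m; rewrite !mcoeff_sc /lpow.
by congr (_ * _); apply: eq_bigr => i _; rewrite e.
Qed.

Lemma sc_comp l l' f : sc l (sc l' f) = sc (fun i => l i * l' i) f.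
Proof.
apply/mpolyP => m; rewrite !mcoeff_sc mulrA; congr (_ * _).
by rewrite /lpow -big_split; apply: eq_bigr => i _; rewrite exprMn.
Qed.

Lemma sc1 f : sc (fun _ => 1) f = f.
Proof.
apply/mpolyP => m; rewrite mcoeff_sc /lpow big1 ?mul1r // => i _.
exact: expr1n.
Qed.

Lemma scX l i : sc l 'X_i = l i *: 'X_i.
Proof. by rewrite /sc comp_mpolyXU -tnth_nth tnth_mktuple. Qed.

End Sc.

Section SS.
Variables (F : fieldType) (d : nat).
Local Notation P := {mpoly F[d]}.
Local Notation eg := (evalgens (F:=F) (d:=d)).

Definition Sg (f : P) := exists A B : P, eg B != 0 /\ f * eg B = eg A.

Lemma eg1 : eg 1 = 1. Proof. exact: comp_mpoly1. Qed.
Lemma egM a b : eg (a * b) = eg a * eg b. Proof. exact: rmorphM. Qed.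
Lemma egD a b : eg (a + b) = eg a + eg b. Proof. exact: rmorphD. Qed.
Lemma egN a : eg (- a) = - eg a. Proof. exact: rmorphN. Qed.

Lemma S_C c : Sg c%:MP.
Proof. exists c%:MP, 1; rewrite eg1 oner_neq0 mulr1; split => //. by rewrite /evalgens comp_mpolyC. Qed.

Lemma S_0 : Sg 0. Proof. by rewrite -mpolyC0; exact: S_C. Qed.
Lemma S_1 : Sg 1. Proof. by rewrite -mpolyC1; exact: S_C. Qed.

Lemma S_D f g : Sg f -> Sg g -> Sg (f + g).
Proof.
move=> [A1 [B1 [h1 e1]]] [A2 [B2 [h2 e2]]].
exists (A1 * B2 + A2 * B1), (B1 * B2); rewrite egM mulf_neq0 //; split => //.
by rewrite egD !egM -e1 -e2; ring.
Qed.

Lemma S_M f g : Sg f -> Sg g -> Sg (f * g).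
Proof.
move=> [A1 [B1 [h1 e1]]] [A2 [B2 [h2 e2]]].
exists (A1 * A2), (B1 * B2); rewrite egM mulf_neq0 //; split => //.
by rewrite egM -e1 -e2; ring.
Qed.

Lemma S_N f : Sg f -> Sg (- f).
Proof.
move=> [A1 [B1 [h1 e1]]]; exists (- A1), B1; split => //.
by rewrite egN -e1 mulNr.
Qed.

Lemma S_B f g : Sg f -> Sg g -> Sg (f - g).
Proof. by move=> *; apply: S_D => //; apply: S_N. Qed.

Lemma S_Z c f : Sg f -> Sg (c *: f).
Proof. by move=> h; rewrite -mul_mpolyC; apply: S_M => //; apply: S_C. Qed.

Lemma S_X f n : Sg f -> Sg (f ^+ n).
Proof.
move=> h; elim: n => [|n ih]; first by rewrite expr0; exact: S_1.
by rewrite exprS; apply: S_M.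
Qed.

Lemma S_div f g h : Sg f -> Sg g -> g != 0 -> h * g = f -> Sg h.
Proof.
move=> [A1 [B1 [h1 e1]]] [A2 [B2 [h2 e2]]] nz e.
have nzA2 : eg A2 != 0 by rewrite -e2 mulf_neq0.
exists (B2 * A1), (A2 * B1); rewrite egM mulf_neq0 //; split => //.
by rewrite !egM -e1 -e2 -e; ring.
Qed.

Lemma S_gen (k : 'I_d) : Sg (genpoly F d k).
Proof.
exists 'X_k, 1; rewrite eg1 oner_neq0 mulr1; split => //.
by rewrite /evalgens comp_mpolyXU -tnth_nth tnth_mktuple.
Qed.

Lemma S_poly (f : P) :
  (forall m, m \in msupp f -> forall i : 'I_d,
       ~~ odd (m i) /\ (0 < m i)%N -> Sg ('X_i ^+ 2)) ->
  (forall m, m \in msupp f -> forall i : 'I_d, ~~ odd (m i)) -> Sg f.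
Proof.
move=> hX hev; rewrite [f]mpolyE big_seq; apply: big_ind; [exact: S_0|exact: S_D|].
move=> m hm; apply: S_Z; rewrite mpolyXE_id; apply: big_ind; [exact: S_1|exact: S_M|].
move=> i _; have ev := hev m hm i.
case: (posnP (m i)) => [->|pos]; first by rewrite expr0; exact: S_1.
have -> : m i = (2 * (m i)./2)%N.
  by move: (odd_double_half (m i)); rewrite (negbTE ev) add0n -mul2n.
by rewrite exprM; apply: S_X; apply: (hX m hm i); split.
Qed.

End SS.

Section DD.
Variables (F : fieldType) (n : nat).
Local Notation d := n.+1.
Local Notation P := {mpoly F[d]}.

Definition rs (s : {ffun 'I_d -> bool}) (i : 'I_d) : F := (-1) ^+ s i.
Definition mu (s : {ffun 'I_d -> bool}) (i : 'I_d) : F :=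
  rs s i * (if i.+1 == d then 1 else rs s (inord i.+1)).

Lemma signP (b : bool) (x : P) : (-1) ^+ b * x = ((-1) ^+ b : F) *: x.
Proof. by case: b => /=; rewrite ?(expr1, expr0, mulN1r, scaleN1r, mul1r, scale1r). Qed.

Lemma sum_eqn (E : 'I_d -> P) k :
  \sum_(j < d | (j : nat) == k) E j = if (k < d)%N then E (inord k) else 0.
Proof.
case: ltnP => h.
  rewrite (big_pred1 (inord k)) // => j /=.
  by rewrite -(inj_eq val_inj) /= inordK.
rewrite big_pred0 // => j; apply/negbTE; apply/eqP => e.
by move: (ltn_ord j); rewrite e ltnNge h.
Qed.

Lemma Wact_sc s f : Wact s f = sc (mu s) f.
Proof.
rewrite /Wact /sc; congr comp_mpoly; apply: eq_mktuple => i.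
rewrite /coordL /Wmat /mu /rs tr_diag_mx mul_mx_diag mul_diag_mx !mxE.
case: ifP => hi; first by rewrite hi mulr1 signP.
rewrite sum_eqn.
have hlt : (i.+1 < d)%N by move: (ltn_ord i); rewrite leq_eqVlt hi.
rewrite hlt mxE mul_diag_mx !mxE inordK // eqxx.
by rewrite -mulrA [X in _ * X]mulrC !signP scalerA.
Qed.

End DD.

Section EE.
Variables (F : fieldType) (n : nat).
Local Notation d := n.+1.
Local Notation P := {mpoly F[d]}.

Lemma genM_mul (u : 'cV[P]_d) (i : 'I_d) :
 (genM F d *m u) i 0 = (if (i.+1 < d)%N then 'X_i * u (inord i.+1) 0 else 0)
   - (if (0 < i)%N then 'X_(inord i.-1) * u (inord i.-1) 0 else 0).
Proof.
rewrite mxE.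
transitivity (\sum_(j < d | (j:nat) == i.+1) ('X_i * u j 0) +
   \sum_(j < d | (j:nat) == i.-1) (if (0 < i)%N then - ('X_j * u j 0) else 0)).
  rewrite !(big_mkcond (fun j : 'I_d => (j : nat) == _)) -big_split.
  apply: eq_bigr => j _ /=; rewrite /genM mxE.
  case: (eqVneq (j : nat) i.+1) => [e|ne].
    have -> : ((j : nat) == i.-1) = false by apply/negbTE/eqP; lia.
    by rewrite addr0.
  case: (eqVneq (i : nat) j.+1) => [e|ne2].
    have -> : ((j : nat) == i.-1) by apply/eqP; lia.
    have -> : (0 < i)%N by lia.
    by rewrite add0r mulNr.
  case: (eqVneq (j : nat) i.-1) => [e|ne3]; last by rewrite addr0 mul0r.
  have -> : (0 < i)%N = false by apply/negbTE; lia.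
  by rewrite addr0 mul0r.
rewrite !sum_eqn.
have -> : (i.-1 < d)%N by move: (ltn_ord i); lia.
by case: ifP => _; case: ifP => _; rewrite ?oppr0.
Qed.

End EE.

Arguments rs {F n}.
Arguments mu {F n}.
Section FF.
Variables (F : fieldType) (n : nat).
Local Notation d := n.+1.
Local Notation P := {mpoly F[d]}.

Definition w (k : nat) : 'cV[P]_d := iter k (mulmx (genM F d)) (genv F d).

Lemma wS k : w k.+1 = genM F d *m w k. Proof. by []. Qed.

Lemma Wact_X s (i : 'I_d) : Wact s ('X_i : P) = mu s i *: 'X_i.
Proof. by rewrite Wact_sc scX. Qed.

Lemma mu_lt s (i : 'I_d) : (i.+1 < d)%N -> mu s i = rs s i * rs s (inord i.+1) :> F.
Proof. by move=> h; rewrite /mu ifF //; apply/negbTE; rewrite neq_ltn h. Qed.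

Lemma mu_pred s (i : 'I_d) : (0 < i)%N -> mu s (inord i.-1) = rs s (inord i.-1) * rs s i :> F.
Proof.
move=> h; rewrite /mu inordK; last by move: (ltn_ord i); lia.
rewrite prednK // ifF; last by apply/negbTE; rewrite neq_ltn ltn_ord.
by congr (_ * _); congr (rs s _); apply: val_inj; rewrite /= inordK.
Qed.

Lemma rs2 (s : {ffun 'I_d -> bool}) (i : 'I_d) : rs s i * rs s i = 1 :> F.
Proof. by rewrite /rs; case: (s i); rewrite /= ?expr1 ?expr0 ?mulrNN mulr1. Qed.

Lemma Wact0 s : Wact s (0 : P) = 0. Proof. by rewrite /Wact rmorph0. Qed.
Lemma WactM s (a b : P) : Wact s (a * b) = Wact s a * Wact s b.
Proof. by rewrite /Wact rmorphM. Qed.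
Lemma WactB s (a b : P) : Wact s (a - b) = Wact s a - Wact s b.
Proof. by rewrite /Wact rmorphB. Qed.
Lemma WactD s (a b : P) : Wact s (a + b) = Wact s a + Wact s b.
Proof. by rewrite /Wact rmorphD. Qed.
Lemma Wact_sum s (I : Type) (r : seq I) (p : pred I) (G : I -> P) :
  Wact s (\sum_(i <- r | p i) G i) = \sum_(i <- r | p i) Wact s (G i).
Proof. by rewrite /Wact rmorph_sum. Qed.
Lemma Wact_prod s (I : Type) (r : seq I) (p : pred I) (G : I -> P) :
  Wact s (\prod_(i <- r | p i) G i) = \prod_(i <- r | p i) Wact s (G i).
Proof. by rewrite /Wact rmorph_prod. Qed.

Lemma Wact_w s k (i : 'I_d) : Wact s (w k i 0) = rs s i *: w k i 0.
Proof.
elim: k i => [|k ih] i.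
  rewrite /w /= /genv mxE; case: ifP => h.
    by rewrite Wact_X /mu h mulr1.
  by rewrite Wact0 scaler0.
rewrite wS genM_mul WactB scalerBr.
congr (_ - _).
  case: ifP => h; last by rewrite Wact0 scaler0.
  rewrite WactM Wact_X ih mu_lt // -scalerAl -scalerAr !scalerA.
  by rewrite -mulrA rs2 mulr1.
case: ifP => h; last by rewrite Wact0 scaler0.
rewrite WactM Wact_X ih mu_pred // -scalerAl -scalerAr !scalerA.
by rewrite mulrC mulrA rs2 mul1r.
Qed.

Lemma Wact_gen s k : Wact s (genpoly F d k) = genpoly F d k.
Proof.
rewrite /genpoly /bform Wact_sum; apply: eq_bigr => i _.
rewrite WactM -/(w k) Wact_w -scalerAl -scalerAr scalerA rs2 scale1r //.
Qed.

End FF.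

Section GG.
Variables (F : fieldType) (n : nat).
Local Notation d := n.+1.
Local Notation P := {mpoly F[d]}.
Local Notation w := (w F n).

Definition Z (t : nat) (f : P) : P := sc (fun i : 'I_d => ((t <= i)%N)%:R) f.

Lemma Z0 t : Z t 0 = 0. Proof. by rewrite /Z /sc rmorph0. Qed.
Lemma ZM t a b : Z t (a * b) = Z t a * Z t b. Proof. by rewrite /Z /sc rmorphM. Qed.
Lemma ZB t a b : Z t (a - b) = Z t a - Z t b. Proof. by rewrite /Z /sc rmorphB. Qed.
Lemma ZD t a b : Z t (a + b) = Z t a + Z t b. Proof. by rewrite /Z /sc rmorphD. Qed.
Lemma Z_sum t (I : Type) (r : seq I) (p : pred I) (G : I -> P) :
  Z t (\sum_(i <- r | p i) G i) = \sum_(i <- r | p i) Z t (G i).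
Proof. by rewrite /Z /sc rmorph_sum. Qed.
Lemma Z_prod t (I : Type) (r : seq I) (p : pred I) (G : I -> P) :
  Z t (\prod_(i <- r | p i) G i) = \prod_(i <- r | p i) Z t (G i).
Proof. by rewrite /Z /sc rmorph_prod. Qed.

Lemma Z_X t (i : 'I_d) : (t <= i)%N -> Z t 'X_i = 'X_i.
Proof. by move=> h; rewrite /Z scX h scale1r. Qed.

Lemma Z_mono t t' f : (t' <= t)%N -> Z t f = f -> Z t' f = f.
Proof.
move=> h e; rewrite -e /Z sc_comp; apply: eq_sc => i.
case: (leqP t i) => hi; last by rewrite /= mulr0.
have -> : (t' <= i)%N by lia.
by rewrite mulr1.
Qed.

Lemma wstruct k : (k <= n)%N ->
  [/\ forall i : 'I_d, (i < n - k)%N -> w k i 0 = 0,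
      w k (inord (n - k)) 0 = \prod_(l < d | (n - k <= l)%N) 'X_l &
      forall i : 'I_d, (n - k < i)%N -> Z (n - k).+1 (w k i 0) = w k i 0].
Proof.
elim: k => [|k ih] hk.
  rewrite subn0; split.
  - move=> i hi; rewrite /w /= /genv mxE ifF //; apply/negbTE; rewrite eqSS neq_ltn hi //.
  - rewrite /w /= /genv mxE inordK // eqxx.
    rewrite (big_pred1 (inord n)) // => l /=.
    rewrite -val_eqE /= inordK //; move: (ltn_ord l); rewrite ltnS => hl.
    by rewrite eqn_leq hl.
  - by move=> i hi; move: (ltn_ord i); lia.
have [ha hb hc] := ih (ltnW hk).
have ht : (0 < n - k)%N by lia.
have Zall : forall j : 'I_d, Z (n - k) (w k j 0) = w k j 0.
  move=> j; case: (ltngtP j (n - k)) => hj.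
  - by rewrite ha // Z0.
  - exact: Z_mono (hc j hj).
  - have -> : j = inord (n - k) by apply: val_inj; rewrite /= inordK //; lia.
    rewrite hb Z_prod; apply: eq_bigr => l hl; exact: Z_X.
have e1 : (n - k.+1 = (n - k).-1)%N by lia.
split.
- move=> i hi; rewrite wS genM_mul !ha ?mulr0 ?if_same ?subr0 //.
  + by rewrite inordK; move: (ltn_ord i); lia.
  + by rewrite inordK; lia.
- rewrite wS genM_mul.
  set i0 := inord (n - k.+1) : 'I_d.
  have vi0 : (i0 : nat) = (n - k.+1)%N by rewrite /i0 inordK //; lia.
  rewrite (ha (inord i0.-1)); last by rewrite inordK; lia.
  rewrite mulr0 if_same subr0 ifT; last by rewrite vi0; lia.
  have -> : inord i0.+1 = inord (n - k) :> 'I_d by rewrite vi0; congr inord; lia.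
  rewrite hb [RHS](bigD1 i0) /=; last by rewrite vi0.
  congr (_ * _); apply: eq_bigl => l.
  rewrite -val_eqE /= vi0.
  by apply/idP/idP => [h|/andP [h1 h2]]; [apply/andP; split|]; lia.
- move=> i hi; have -> : (n - k.+1).+1 = (n - k)%N by lia.
  rewrite wS genM_mul ZB; congr (_ - _).
    case: ifP => h1; last by rewrite Z0.
    by rewrite ZM Z_X ?Zall //; lia.
  case: ifP => h2; last by rewrite Z0.
  case: (eqVneq (i : nat) (n - k)%N) => hik.
    rewrite (ha (inord i.-1)) ?mulr0 ?Z0 //.
    by rewrite inordK; lia.
  move/eqP: hik => hik; move: (ltn_ord i) => hid.
  by rewrite ZM Z_X ?Zall // inordK; lia.
Qed.

End GG.

Section HH.
Variables (F : fieldType) (n : nat).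
Hypothesis h2 : (2%:R : F) != 0.
Local Notation d := n.+1.
Local Notation P := {mpoly F[d]}.
Local Notation w := (w F n).
Local Notation Sg := (Sg (F:=F) (d:=d)).

Lemma X_neq0 (i : 'I_d) : ('X_i : P) != 0.
Proof.
apply/eqP => h; move: (@mcoeffXU d F i i); rewrite h mcoeff0 eqxx => /eqP.
by rewrite eq_sym oner_eq0.
Qed.

Lemma Z_supp t (f : P) m : Z t f = f -> m \in msupp f ->
  forall i : 'I_d, (i < t)%N -> m i = 0%N.
Proof.
move=> e hm i hi; apply/eqP; apply: contraT => hpos.
have := congr1 (mcoeff m) e; rewrite /Z mcoeff_sc.
rewrite /lpow (bigD1 i) //=.
rewrite (_ : (t <= i)%N = false); last by apply/negbTE; rewrite -ltnNge.
rewrite mulr0n expr0n (negbTE hpos) mul0r => /esym /eqP.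
by rewrite mul0r mcoeff_eq0 hm.
Qed.

Definition sj (j : 'I_d) : {ffun 'I_d -> bool} := [ffun i : 'I_d => (i <= j)%N].

Lemma mu_sj (j i : 'I_d) : mu (sj j) i = if i == j then -1 else 1 :> F.
Proof.
rewrite /mu /rs /sj !ffunE.
case: (ltngtP i j) => hij.
- rewrite ifF; last by apply/negbTE; rewrite neq_ltn; move: (ltn_ord j); lia.
  rewrite ?ffunE inordK; last by move: (ltn_ord j); lia.
  rewrite ifF; last by apply/negbTE; rewrite neq_ltn hij.
  by rewrite hij /= expr1 mulrNN mulr1.
- have -> : (i == j) = false by apply/negbTE; rewrite -val_eqE neq_ltn hij orbT.
  case: ifP => hd; first by rewrite /= expr0 mulr1.
  rewrite ?ffunE inordK; last first.
    by move: (ltn_ord i) hd; rewrite ltnS leq_eqVlt => /orP [/eqP e|]; [rewrite e eqxx|].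
  rewrite (_ : (i.+1 <= j)%N = false); last by apply/negbTE; lia.
  by rewrite /= expr0 mulr1.
- have -> : i = j by apply: val_inj.
  rewrite eqxx /= expr1; case: ifP => hd; first by rewrite mulr1.
  rewrite ?ffunE inordK ?ltnn /= ?expr0 ?mulr1 //.
  by move: (ltn_ord j) hd; rewrite ltnS leq_eqVlt => /orP [/eqP e|]; [rewrite e eqxx|].
Qed.

Lemma Wact_even (f : P) m : (forall s, Wact s f = f) -> m \in msupp f ->
  forall j : 'I_d, ~~ odd (m j).
Proof.
move=> e hm j; apply: contraT; rewrite negbK => hodd.
have := congr1 (mcoeff m) (e (sj j)); rewrite Wact_sc mcoeff_sc.
rewrite /lpow (bigD1 j) //= mu_sj eqxx big1; last first.
  by move=> i hi; rewrite mu_sj (negbTE hi) expr1n.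
rewrite mulr1 -signr_odd hodd expr1 mulN1r => /eqP.
rewrite eq_sym -subr_eq0 opprK -mulr2n -mulr_natr mulf_eq0 (negbTE h2) orbF.
by rewrite mcoeff_eq0 hm.
Qed.

Lemma S_inv t (f : P) : (forall s, Wact s f = f) -> Z t f = f ->
  (forall l : 'I_d, (t <= l)%N -> Sg ('X_l ^+ 2)) -> Sg f.
Proof.
move=> hW hZ hX; apply: S_poly; last by move=> m hm; apply: Wact_even.
move=> m hm i [_ hpos]; apply: hX; rewrite leqNgt; apply/negP => hi.
by move: (Z_supp hZ hm hi) hpos => ->.
Qed.

End HH.

Section II.
Variables (F : fieldType) (n : nat).
Hypothesis h2 : (2%:R : F) != 0.
Local Notation d := n.+1.
Local Notation P := {mpoly F[d]}.
Local Notation w := (w F n).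
Local Notation Sg := (Sg (F:=F) (d:=d)).

Lemma gen_split k (i0 : 'I_d) : genpoly F d k =
  w k i0 0 ^+ 2 + \sum_(i < d | i != i0) w k i 0 * w k i 0.
Proof. by rewrite /genpoly /bform (bigD1 i0) //= expr2. Qed.

Lemma step k : (k <= n)%N ->
  (forall l : 'I_d, (n - k < l)%N -> Sg ('X_l ^+ 2)) ->
  Sg ('X_(inord (n - k)) ^+ 2).
Proof.
move=> hk H; have [ha hb hc] := wstruct F hk.
set i0 : 'I_d := inord (n - k) in hb *.
have vi0 : (i0 : nat) = (n - k)%N by rewrite /i0 inordK //; lia.
set R := \sum_(i < d | i != i0) w k i 0 * w k i 0.
have SR : Sg R.
  apply: (S_inv h2 (t := (n - k).+1)).
  - move=> s; rewrite Wact_sum; apply: eq_bigr => i _.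
    by rewrite WactM Wact_w -scalerAl -scalerAr scalerA rs2 scale1r.
  - rewrite Z_sum; apply: eq_bigr => i hi.
    case: (ltngtP i (n - k)) => h.
    + by rewrite ha // mul0r Z0.
    + by rewrite ZM hc.
    + by move: hi; rewrite -val_eqE /= vi0 h eqxx.
  - exact: H.
set B := \prod_(l < d | (n - k < l)%N) ('X_l ^+ 2 : P).
have SB : Sg B.
  by apply: big_ind => //; [exact: S_1 | exact: S_M].
have nzB : B != 0.
  by apply/prodf_neq0 => l _; rewrite expf_neq0 // X_neq0.
have hkd : (k < d)%N by lia.
have SG : Sg (genpoly F d k) := S_gen F (Ordinal hkd).
apply: (S_div (f := genpoly F d k - R) (g := B)) => //; first exact: S_B.
rewrite (gen_split k i0) addrK hb (bigD1 i0) /=; last by rewrite vi0.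
rewrite /B exprMn prodrXl; congr (_ * _); congr (_ ^+ 2).
apply: eq_bigl => l; rewrite -val_eqE /= vi0.
apply/idP/idP => [h|]; first by apply/andP; split; lia.
by case/andP => h3 h4; lia.
Qed.

Lemma Xsq k : (k <= n)%N -> forall l : 'I_d, (n - k <= l)%N -> Sg ('X_l ^+ 2).
Proof.
elim: k => [|k ih] hk l hl.
  have -> : l = inord n by apply: val_inj; rewrite /= inordK //; move: (ltn_ord l); lia.
  have := @step 0 (leq0n _); rewrite subn0; apply.
  by move=> l' hl'; move: (ltn_ord l'); lia.
case: (eqVneq (n - k.+1)%N l) => e.
  have -> : l = inord (n - k.+1) by apply: val_inj; rewrite /= inordK //; lia.
  apply: step => // l' hl'; apply: ih; [exact: ltnW | lia].
by apply: ih; [exact: ltnW | move/eqP: e; lia].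
Qed.

Lemma Xsq_all (l : 'I_d) : Sg ('X_l ^+ 2).
Proof. by apply: (@Xsq n (leqnn n)); rewrite subnn. Qed.

End II.

Section JJ.
Variables (F : fieldType) (n : nat).
Hypothesis h2 : (2%:R : F) != 0.
Local Notation d := n.+1.
Local Notation P := {mpoly F[d]}.
Local Notation Sg := (Sg (F:=F) (d:=d)).
Local Notation sT := {ffun 'I_d -> bool}.

Definition sx (a b : sT) : sT := [ffun i => a i (+) b i].
Definition s0 : sT := [ffun => false].

Lemma Wact_comp (a b : sT) (f : P) : Wact a (Wact b f) = Wact (sx a b) f.
Proof.
rewrite !Wact_sc sc_comp; apply: eq_sc => i.
rewrite /mu /rs /sx !ffunE !signr_addb.
case: ifP => _; rewrite ?mulr1 ?ffunE ?signr_addb; ring.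
Qed.

Lemma Wact_s0 (f : P) : Wact s0 f = f.
Proof.
rewrite Wact_sc -[RHS]sc1; apply: eq_sc => i.
by rewrite /mu /rs /s0 !ffunE; case: ifP => _; rewrite ?ffunE /= expr0 mulr1.
Qed.

Lemma sx_inj a : injective (sx a).
Proof.
move=> b c e; apply/ffunP => i; have := congr1 (fun g : sT => g i) e.
by rewrite /sx !ffunE => /addbI.
Qed.

Lemma sxx a : sx a a = s0.
Proof. by apply/ffunP => i; rewrite /sx /s0 !ffunE addbb. Qed.

Lemma Wact_neq0 s (q : P) : q != 0 -> Wact s q != 0.
Proof.
move=> hq; apply: contraNneq hq => e.
by rewrite -(Wact_s0 q) -(sxx s) -Wact_comp e Wact0.
Qed.

Lemma Z0_id (f : P) : Z 0 f = f.
Proof. by rewrite /Z -[RHS]sc1; apply: eq_sc => i. Qed.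

Lemma S_invariant (f : P) : (forall s, Wact s f = f) -> Sg f.
Proof.
move=> h; apply: (S_inv h2 (t := 0)) => //; first exact: Z0_id.
by move=> l _; apply: Xsq_all.
Qed.

Lemma part2 (p q : P) : q != 0 ->
  (forall s : sT, Wact s p * q = p * Wact s q) ->
  exists A B : P, evalgens B != 0 /\ p * evalgens B = q * evalgens A.
Proof.
move=> hq hinv.
set N := \prod_(s : sT) Wact s q.
set N' := \prod_(s : sT | s != s0) Wact s q.
have hN : N = q * N' by rewrite /N (bigD1 s0) //= Wact_s0.
have nzN : N != 0 by apply/prodf_neq0 => s _; apply: Wact_neq0.
have Ninv : forall s, Wact s N = N.
  move=> s; rewrite /N Wact_prod.
  rewrite [RHS](reindex_inj (@sx_inj s)) /=.
  by apply: eq_bigr => b _; rewrite Wact_comp.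
set p' := p * N'.
have hpq : p' * q = p * N by rewrite hN /p'; ring.
have p'inv : forall s, Wact s p' = p'.
  move=> s.
  have e1 : Wact s p' * Wact s q = Wact s p * N by rewrite -WactM hpq WactM Ninv.
  have : Wact s q * q * (Wact s p' - p') = 0.
    transitivity (Wact s p' * Wact s q * q - Wact s q * (p' * q)); first by ring.
    rewrite e1 hpq.
    transitivity ((Wact s p * q - p * Wact s q) * N); first by ring.
    by rewrite hinv subrr mul0r.
  move/eqP; rewrite !mulf_eq0 (negbTE (Wact_neq0 s hq)) (negbTE hq) /= subr_eq0.
  by move/eqP.
have [A1 [B1 [nz1 e1]]] := S_invariant p'inv.
have [A2 [B2 [nz2 e2]]] := S_invariant Ninv.
have nzA2 : evalgens A2 != 0 by rewrite -e2 mulf_neq0.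
exists (A1 * B2), (A2 * B1); rewrite (egM A1 B2) (egM A2 B1); split.
  exact: (mulf_neq0 nzA2 nz1).
rewrite -e1 -e2.
transitivity ((p * N) * evalgens B2 * evalgens B1); first by ring.
by rewrite -hpq; ring.
Qed.

End JJ.


Theorem lemma3p16 (R : realType) (d : nat) (hd : (2 <= d)%N) :
  (* the generators are W_d(C)-invariant *)
  (forall (s : {ffun 'I_d -> bool}) (k : 'I_d),
      Wact s (genpoly (complex R) d k) = genpoly (complex R) d k) /\
  (* every W_d(C)-invariant rational function p/q on L^(d-1) lies in the
     field generated by the generators: p/q = P(gens)/Q(gens) *)
  (forall p q : {mpoly (complex R)[d]}, q != 0 ->
     (forall s : {ffun 'I_d -> bool}, Wact s p * q = p * Wact s q) ->
     exists P Q : {mpoly (complex R)[d]},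
       evalgens Q != 0 /\ p * evalgens Q = q * evalgens P).
Proof.
case: d hd => [//|n] hd.
have h2 : (2%:R : complex R) != 0 by rewrite Num.Theory.pnatr_eq0.
split.
- by move=> s k; apply: Wact_gen.
- by move=> p q hq hinv; apply: (part2 h2 hq hinv).
Qed.
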